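(* Let $\boldsymbol V$ be a generically irreducible $(\boldsymbol{\mathfrak g}_d,K)$-module for $SL(2,\mathbb R)$ with $H_{D_d}(\boldsymbol V)\neq0$. Then $\boldsymbol V$ has an infinitesimal character $\boldsymbol\lambda\in\mathrm{Hom}_{\mathbb C[t]}(\boldsymbol{\mathfrak k},\mathbb C[t])$ with respect to the fundamental Cartan subfamily $\boldsymbol{\mathfrak k}$. Moreover, for any $\mu\in\mathfrak k^*$ such that the $\mu$-weight space of $H_{D_d}(\boldsymbol V)$ is non-zero, $1\otimes\mu$ is an infinitesimal character of $\boldsymbol V$, and every infinitesimal character $\boldsymbol\lambda$ of $\boldsymbol V$ with respect to $\boldsymbol{\mathfrak k}$ equals $1\otimes w\cdot\mu\in\mathbb C[t]\otimes_{\mathbb C}\mathfrak k^*$ for some $w\in W(\mathfrak g,\mathfrak k)=\{1,w_0\}$, where $w_0$ acts on $\mathfrak k^*$ by $-1$.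
   Context: Notation as for $SL(2,\mathbb R)$: $\mathfrak g=\mathfrak{sl}(2,\mathbb C)$ with triple $x,y,h$, $\mathfrak k=\mathbb Ch$, $\mathfrak p=\mathbb Cx\oplus\mathbb Cy$; $\tilde x=t\otimes x$, $\tilde y=t\otimes y$, $\tilde h=1\otimes h$; $\boldsymbol{\mathfrak g}_d=\mathbb C[t]\tilde h\oplus\mathbb C[t]\tilde x\oplus\mathbb C[t]\tilde y$, $\boldsymbol{\mathfrak k}=\mathbb C[t]\tilde h$, with $[\tilde x,\tilde y]=t^2\tilde h$. Spin module $\boldsymbol S_d=\mathbb C[t]1\oplus\mathbb C[t]\tilde y$ (with $\tilde x\cdot\tilde y=4$, $\tilde x\cdot1=0$, $\tilde y\cdot1=\tilde y$, $\tilde y\cdot\tilde y=0$, $\tilde h$ acting with weights $1,-1$), Dirac operator $D_d=\frac14(\tilde x\otimes\gamma_d(\tilde y)+\tilde y\otimes\gamma_d(\tilde x))$ on $\boldsymbol V\otimes_{\mathbb C[t]}\boldsymbol S_d$, $H_{D_d}(\boldsymbol V)=\ker D_d/(\ker D_d\cap\mathrm{im}D_d)$ with its $\tilde h$-weight decomposition (weights identified with $\mu\in\mathfrak k^*$ via $\mu(h)$). $\mathcal Z(\boldsymbol{\mathfrak g}_d)=\mathbb C[t][\Omega_d]$ with $\Omega_d=\frac18t^2\tilde h^2+\frac14\tilde x\tilde y+\frac14\tilde y\tilde x$, and its Harish-Chandra image is $\frac{t^2}{8}(\tilde h^2-1)$. A generically irreducible module (all but countably many fibers irreducible) is quasi-simple,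 $\Omega_d$ acting by some $\omega_{\boldsymbol V}(t)\in\mathbb C[t]$; $\boldsymbol\lambda\in\boldsymbol{\mathfrak k}^*$ is an infinitesimal character w.r.t. $\boldsymbol{\mathfrak k}$ iff $\omega_{\boldsymbol V}(t)=\frac{t^2}{8}(\boldsymbol\lambda(\tilde h)^2-1)$. *)

(* Defs.v *)
From HB Require Import structures.
From mathcomp Require Import all_boot all_order all_algebra.
From mathcomp Require Import reals complex.
Set Implicit Arguments.
Unset Strict Implicit.
Unset Printing Implicit Defensive.
Import Order.TTheory GRing.Theory Num.Theory.
Local Open Scope ring_scope.

(* A (g_d,K)-module for
   SL(2,R) is a C[t]-module V (V : lmodType {poly C}) with C[t]-linear
   operators X = x~ = t(x)x, Y = y~ = t(x)y, H = h~ = 1(x)h (given as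
   {linear V -> V}), and an algebraic action of K = SO(2), encoded by its
   weight (isotypic) decomposition: every vector is a finite sum of vectors on
   which h~ acts by an integer (differential of the K-action = action of k). *)

Definition gdK_module (C : fieldType) (V : lmodType {poly C}) (X Y H : V -> V)
  : Prop :=
  [/\ (forall v, H (X v) - X (H v) = X v *+ 2),
      (forall v, H (Y v) - Y (H v) = - (Y v *+ 2)),
      (forall v, X (Y v) - Y (X v) = 'X^2 *: H v) &
      (forall v, exists s : seq (int * V),
          v = \sum_(p <- s) p.2 /\
          (forall p, p \in s -> H p.2 = (p.1)%:~R *: p.2))].

(* no C[t]-torsion (flat family) *)
Definition torsion_free (C : fieldType) (V : lmodType {poly C}) : Prop :=
  forall (p : {poly C}) (v : V), p *: v = 0 -> p = 0 \/ v = 0.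

Definition admissible (C : fieldType) (V : lmodType {poly C}) (H : V -> V)
  : Prop :=
  forall n : int, exists s : seq V,
    (forall u, u \in s -> H u = n%:~R *: u) /\
    (forall v, H v = n%:~R *: v ->
       exists c : seq {poly C}, v = \sum_(i < size s) c`_i *: s`_i).

(* the submodule (t - z) V, kernel of V -> V|_z = V / (t - z) V *)
Definition tzV (C : fieldType) (V : lmodType {poly C}) (z : C) (w : V) : Prop :=
  exists v, w = ('X - z%:P) *: v.

(* the fiber V|_z = V/(t-z)V is an irreducible (g_z,K)-module: it is non-zero
   and every (g,K)-submodule is 0 or everything; submodules of the fiber are
   described by their preimages W in V (submodules containing (t-z)V). *)
Definition fiber_irreducible (C : fieldType) (V : lmodType {poly C})
  (X Y H : V -> V) (z : C) : Prop :=
  (exists v : V, ~ tzV z v) /\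
  forall W : V -> Prop,
    W 0 ->
    (forall u v, W u -> W v -> W (u + v)) ->
    (forall (p : {poly C}) v, W v -> W (p *: v)) ->
    (forall v, tzV z v -> W v) ->
    (forall v, W v -> [/\ W (X v), W (Y v) & W (H v)]) ->
    (* K-stability: W contains the K-isotypic components of its elements *)
    (forall s : seq (int * V), uniq (map fst s) ->
        (forall p, p \in s -> H p.2 = (p.1)%:~R *: p.2) ->
        W (\sum_(p <- s) p.2) -> forall p, p \in s -> W p.2) ->
    (forall v, W v -> tzV z v) \/ (forall v, W v).

Definition generically_irreducible (C : fieldType) (V : lmodType {poly C})
  (X Y H : V -> V) : Prop :=
  exists f : nat -> C, forall z, ~ fiber_irreducible X Y H z -> exists n, f n = z.

(* V (x)_{C[t]} S_d = V (x) 1  +  V (x) y~, identified with V * V: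
   the pair (v, w) stands for v (x) 1 + w (x) y~.
   D_d = 1/4 (x~ (x) g(y~) + y~ (x) g(x~)) with
   y~.1 = y~, y~.y~ = 0, x~.1 = 0, x~.y~ = 4, hence
   D_d (v, w) = (y~ w, 1/4 x~ v). *)
Definition Dirac (C : fieldType) (V : lmodType {poly C}) (X Y : V -> V)
  (a : V * V) : V * V :=
  (Y a.2, (4^-1 : C)%:P *: X a.1).

(* diagonal action of h~ on V (x) S_d (weights 1, -1 on 1, y~) *)
Definition Hspin (C : fieldType) (V : lmodType {poly C}) (H : V -> V)
  (a : V * V) : V * V :=
  (H a.1 + a.1, H a.2 - a.2).

Definition in_ker_D (C : fieldType) (V : lmodType {poly C}) (X Y : V -> V)
  (a : V * V) : Prop := Dirac X Y a = 0.

Definition in_im_D (C : fieldType) (V : lmodType {poly C}) (X Y : V -> V)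
  (a : V * V) : Prop := exists b, a = Dirac X Y b.

(* H_D(V) = ker D / (ker D /\ im D) is non-zero *)
Definition HD_nonzero (C : fieldType) (V : lmodType {poly C}) (X Y : V -> V)
  : Prop :=
  exists a, in_ker_D X Y a /\ ~ in_im_D X Y a.

(* the mu-weight space (mu in k^*, identified with mu(h) in C) of H_D(V) is
   non-zero: some class [a], a in ker D, a not in ker D /\ im D, with
   h~ [a] = mu [a], i.e. h~ a - mu a in ker D /\ im D. *)
Definition HD_weight_nonzero (C : fieldType) (V : lmodType {poly C})
  (X Y H : V -> V) (mu : C) : Prop :=
  exists a, [/\ in_ker_D X Y a,
                in_ker_D X Y (Hspin H a - mu%:P *: a),
                in_im_D X Y (Hspin H a - mu%:P *: a) &
                ~ in_im_D X Y a].

Definition Omega_d (C : fieldType) (V : lmodType {poly C}) (X Y H : V -> V)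
  (v : V) : V :=
  ((8^-1 : C)%:P * 'X^2) *: H (H v) + (4^-1 : C)%:P *: (X (Y v) + Y (X v)).

(* lambda in Hom_{C[t]}(k, C[t]) is determined by lam = lambda(h~) in C[t];
   V has infinitesimal character lambda iff the centre C[t][Omega_d] acts
   through the Harish-Chandra image, i.e. Omega_d acts by t^2/8 (lam^2 - 1). *)
Definition has_infchar (C : fieldType) (V : lmodType {poly C}) (X Y H : V -> V)
  (lam : {poly C}) : Prop :=
  forall v, Omega_d X Y H v = ((8^-1 : C)%:P * 'X^2 * (lam ^+ 2 - 1)) *: v.

(* Main.v *)
Require Import Defs.
From HB Require Import structures.
From mathcomp Require Import all_boot all_order all_algebra.
From mathcomp Require Import reals complex.
From mathcomp Require Import ring.
From mathcomp Require Import boolp.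
From Stdlib Require Import Classical.
Import Order.TTheory GRing.Theory Num.Theory.
Local Open Scope ring_scope.
Set Implicit Arguments.
Unset Strict Implicit.

Definition wt (C : numFieldType) (V : lmodType {poly C}) (H : V -> V) (k : int) (v : V) :=
  H v = (k%:~R : {poly C}) *: v.

Definition wcomp (C : numFieldType) (V : lmodType {poly C}) (s : seq (int * V)) (k : int) : V :=
  \sum_(p <- s | p.1 == k) p.2.

Definition wts (C : numFieldType) (V : lmodType {poly C}) (H : V -> V) (s : seq (int * V)) :=
  forall p, p \in s -> H p.2 = (p.1)%:~R *: p.2.

Lemma wt0 (C : numFieldType) (V : lmodType {poly C}) (H : {linear V -> V}) k : wt H k 0.
Proof. by rewrite /wt linear0 scaler0. Qed.

Lemma wtD (C : numFieldType) (V : lmodType {poly C}) (H : {linear V -> V}) k u v :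
  wt H k u -> wt H k v -> wt H k (u + v).
Proof. by rewrite /wt linearD scalerDr => -> ->. Qed.

Lemma wtZ (C : numFieldType) (V : lmodType {poly C}) (H : {linear V -> V}) k (c : {poly C}) v :
  wt H k v -> wt H k (c *: v).
Proof. by rewrite /wt linearZ_LR => ->; rewrite !scalerA mulrC. Qed.

Lemma wtN (C : numFieldType) (V : lmodType {poly C}) (H : {linear V -> V}) k v :
  wt H k v -> wt H k (- v).
Proof. by rewrite /wt linearN scalerN => ->. Qed.

Lemma wtB (C : numFieldType) (V : lmodType {poly C}) (H : {linear V -> V}) k u v :
  wt H k u -> wt H k v -> wt H k (u - v).
Proof. by move=> hu hv; apply: wtD => //; apply: wtN. Qed.

Lemma wcomp_wt (C : numFieldType) (V : lmodType {poly C}) (H : {linear V -> V}) s k :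
  wts H s -> wt H k (wcomp s k).
Proof.
move=> hs; rewrite /wt /wcomp linear_sum scaler_sumr big_seq_cond [RHS]big_seq_cond.
by apply: eq_bigr => p /andP [ps /eqP <-]; apply: hs.
Qed.

Lemma wcomp_nil (C : numFieldType) (V : lmodType {poly C}) k : wcomp ([::] : seq (int * V)) k = 0.
Proof. by rewrite /wcomp big_nil. Qed.

Lemma wcomp_notin (C : numFieldType) (V : lmodType {poly C}) (s : seq (int * V)) k :
  k \notin map fst s -> wcomp s k = 0.
Proof.
move=> kn; rewrite /wcomp big_seq_cond big1 // => p /andP [ps /eqP pk].
by case/negP: kn; rewrite -pk; apply: map_f.
Qed.

Lemma sum_wcomp (C : numFieldType) (V : lmodType {poly C}) (s : seq (int * V)) r :
  uniq r -> {subset map fst s <= r} ->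
  \sum_(k <- r) wcomp s k = \sum_(p <- s) p.2.
Proof.
move=> ur sub; rewrite /wcomp.
under eq_bigr do rewrite big_mkcond.
rewrite exchange_big /= big_seq [RHS]big_seq; apply: eq_bigr => p ps.
rewrite -big_mkcond /=.
have pr : p.1 \in r by apply: sub; apply: map_f.
elim: r ur pr {sub} => [|j r IH] //= /andP [jr ur].
rewrite in_cons big_cons => /orP [/eqP pj|pr].
  rewrite pj eqxx big1_seq ?addr0 // => i /andP [/eqP ji ir].
  by move: jr; rewrite ji ir.
rewrite IH //; case: eqP => // pj; move: jr; rewrite -pj pr //.
Qed.

Lemma scal_int0 (C : numFieldType) (V : lmodType {poly C}) (n : int) (x : V) :
  ((n%:~R : {poly C}) *: x = 0) -> n != 0 -> x = 0.
Proof.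
move=> h n0; have : ((n%:~R : C)^-1)%:P *: ((n%:~R : {poly C}) *: x) = 0 by rewrite h scaler0.
rewrite scalerA -(rmorph_int (@polyC C)) -rmorphM mulVf ?scale1r //.
by rewrite intr_eq0.
Qed.

Lemma sum_wt0 (C : numFieldType) (V : lmodType {poly C}) (H : {linear V -> V})
  (s : seq (int * V)) :
  uniq (map fst s) -> wts H s -> \sum_(p <- s) p.2 = 0 -> forall p, p \in s -> p.2 = 0.
Proof.
have [n] := ubnP (size s); elim: n s => [|n IHn] [|[k v] s] //= szs /andP [kn us] hs.
rewrite big_cons /= => hsum.
have IH := IHn _ _ us.
have {IHn} IH : forall s0 : seq (int * V), (size s0 < n)%N -> uniq (map fst s0) -> wts H s0 ->
   \sum_(p <- s0) p.2 = 0 -> forall p, p \in s0 -> p.2 = 0 by move=> s0 sz; apply: IHn.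
have szn : (size s < n)%N by [].

pose s' := [seq (p.1, ((p.1 - k)%:~R : {poly C}) *: p.2) | p <- s].
have us' : uniq (map fst s') by rewrite /s' -map_comp.
have hs' : wts H s'.
  move=> p /mapP [q qs ->] /=; rewrite linearZ_LR hs ?in_cons ?qs ?orbT //.
  by rewrite !scalerA mulrC.
have sum0 : \sum_(p <- s') p.2 = 0.
  rewrite /s' big_map /=.
  have : H (v + \sum_(p <- s) p.2) - (k%:~R : {poly C}) *: (v + \sum_(p <- s) p.2) = 0.
    by rewrite hsum linear0 scaler0 subrr.
  rewrite linearD linear_sum (hs (k, v) (mem_head _ _)) /= scalerDr opprD addrACA subrr add0r.
  rewrite scaler_sumr -sumrB => e; rewrite -[X in _ = X]e; apply: eq_big_seq => p ps.
  by rewrite hs ?in_cons ?ps ?orbT // -scalerBl rmorphB.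
have all0 : forall p, p \in s -> p.2 = 0.
  move=> p ps.
  have szn' : (size s' < n)%N by rewrite size_map.
  have := IH s' szn' us' hs' sum0 (p.1, ((p.1 - k)%:~R : {poly C}) *: p.2).
  rewrite /s' map_f // => /(_ isT) /= h; apply: (scal_int0 h).
  by apply: contraNneq kn => /eqP; rewrite subr_eq0 => /eqP <-; apply: map_f.
move=> p; rewrite in_cons => /orP [/eqP -> /=|]; last exact: all0.
by move: hsum; rewrite big1_seq ?addr0 // => q /andP [_]; apply: all0.
Qed.

Lemma wcomp_uniq (C : numFieldType) (V : lmodType {poly C}) (s : seq (int * V)) p :
  uniq (map fst s) -> p \in s -> wcomp s p.1 = p.2.
Proof.
elim: s => [|q s IH] //= /andP [qn us]; rewrite in_cons /wcomp big_cons => /orP [/eqP ->|ps].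
  rewrite eqxx big1_seq ?addr0 // => r /andP [/eqP rq rs].
  by case/negP: qn; rewrite -rq; apply: map_f.
have -> : (q.1 == p.1) = false.
  apply/negP => /eqP qp; case/negP: qn; rewrite qp; apply: map_f => //.
exact: IH.
Qed.

Lemma wcomp_eq (C : numFieldType) (V : lmodType {poly C}) (H : {linear V -> V})
  (s1 s2 : seq (int * V)) :
  wts H s1 -> wts H s2 -> \sum_(p <- s1) p.2 = \sum_(p <- s2) p.2 ->
  forall k, wcomp s1 k = wcomp s2 k.
Proof.
move=> h1 h2 e k.
pose r := undup (map fst (s1 ++ s2)).
have ur : uniq r by apply: undup_uniq.
pose s3 := [seq (j, wcomp s1 j - wcomp s2 j) | j <- r].
have us3 : uniq (map fst s3) by rewrite /s3 -map_comp map_id_in.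
have hs3 : wts H s3.
  by move=> p /mapP [j jr ->] /=; apply: wtB; apply: wcomp_wt.
have sub1 : {subset map fst s1 <= r}.
  by move=> j js; rewrite mem_undup map_cat mem_cat js.
have sub2 : {subset map fst s2 <= r}.
  by move=> j js; rewrite mem_undup map_cat mem_cat js orbT.
have sum0 : \sum_(p <- s3) p.2 = 0.
  by rewrite big_map /= sumrB !sum_wcomp // e subrr.
case kr: (k \in r).
  have := sum_wt0 us3 hs3 sum0 (map_f (fun j => (j, wcomp s1 j - wcomp s2 j)) kr).
  by move/eqP; rewrite subr_eq0 => /eqP.
rewrite !wcomp_notin //; apply/negP => /[dup] kn.
  by move/sub2; rewrite kr.
by move/sub1; rewrite kr.
Qed.

Lemma wcomp_map (C : numFieldType) (V : lmodType {poly C}) (s : seq (int * V))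
  (g : int -> int) (F : int -> V -> V) k :
  injective g -> (forall j, {morph F j : u v / u + v}) -> (forall j, F j 0 = 0) ->
  wcomp [seq (g p.1, F p.1 p.2) | p <- s] (g k) = F k (wcomp s k).
Proof.
move=> gi FD F0; rewrite /wcomp big_map /=.
rewrite (eq_bigl (fun p => p.1 == k)) => [|p]; last by rewrite /= inj_eq.
rewrite (eq_bigr (fun p => F k p.2)) => [|p /eqP -> //].
by rewrite (big_morph (F k) (FD k) (F0 k)).
Qed.


Definition L4 (C : numFieldType) (V : lmodType {poly C}) (w : V * V * V * V)
  (a b c d : {poly C}) : V :=
  a *: w.1.1.1 + b *: w.1.1.2 + c *: w.1.2 + d *: w.2.

Lemma L4D (C : numFieldType) (V : lmodType {poly C}) w (a b c d a' b' c' d' : {poly C}) :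
  @L4 C V w a b c d + L4 w a' b' c' d' = L4 w (a + a') (b + b') (c + c') (d + d').
Proof.
rewrite /L4 !scalerDl addrACA [X in X + _]addrACA [X in X + _ + _]addrACA //.
Qed.

Lemma L4Z (C : numFieldType) (V : lmodType {poly C}) w (e a b c d : {poly C}) :
  e *: @L4 C V w a b c d = L4 w (e * a) (e * b) (e * c) (e * d).
Proof. by rewrite /L4 !scalerDr !scalerA. Qed.

Lemma L4N (C : numFieldType) (V : lmodType {poly C}) w (a b c d : {poly C}) :
  - @L4 C V w a b c d = L4 w (- a) (- b) (- c) (- d).
Proof. by rewrite /L4 !opprD !scaleNr. Qed.

Lemma L4Mn (C : numFieldType) (V : lmodType {poly C}) w (a b c d : {poly C}) n :
  @L4 C V w a b c d *+ n = L4 w (a *+ n) (b *+ n) (c *+ n) (d *+ n).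
Proof. by rewrite /L4 !mulrnDl !scalerMnl. Qed.

Lemma L4e1 (C : numFieldType) (V : lmodType {poly C}) (w : V * V * V * V) : w.1.1.1 = L4 w 1 0 0 0.
Proof. by rewrite /L4 !scale1r !scale0r ?addr0 ?add0r. Qed.
Lemma L4e2 (C : numFieldType) (V : lmodType {poly C}) (w : V * V * V * V) : w.1.1.2 = L4 w 0 1 0 0.
Proof. by rewrite /L4 !scale1r !scale0r ?addr0 ?add0r. Qed.
Lemma L4e3 (C : numFieldType) (V : lmodType {poly C}) (w : V * V * V * V) : w.1.2 = L4 w 0 0 1 0.
Proof. by rewrite /L4 !scale1r !scale0r ?addr0 ?add0r. Qed.
Lemma L4e4 (C : numFieldType) (V : lmodType {poly C}) (w : V * V * V * V) : w.2 = L4 w 0 0 0 1.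
Proof. by rewrite /L4 !scale1r !scale0r ?addr0 ?add0r. Qed.

Lemma L40 (C : numFieldType) (V : lmodType {poly C}) (w : V * V * V * V) :
  0 = L4 w 0 0 0 0.
Proof. by rewrite /L4 !scale0r ?addr0. Qed.

Ltac lin_fin W :=
  rewrite ?(L40 W);
  rewrite !(L4D, L4Z, L4N, L4Mn);
  congr (L4 W _ _ _ _).

Ltac lin4 t1 t2 t3 t4 :=
  let W := fresh "W" in let w1 := fresh "w" in let w2 := fresh "w" in
  let w3 := fresh "w" in let w4 := fresh "w" in
  set w1 := t1; set w2 := t2; set w3 := t3; set w4 := t4; clearbody w1 w2 w3 w4;
  pose W := (w1, w2, w3, w4);
  rewrite ?[w1](L4e1 W) ?[w2](L4e2 W) ?[w3](L4e3 W) ?[w4](L4e4 W);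
  lin_fin W.

Ltac lin3 t1 t2 t3 :=
  let W := fresh "W" in let w1 := fresh "w" in let w2 := fresh "w" in
  let w3 := fresh "w" in
  set w1 := t1; set w2 := t2; set w3 := t3; clearbody w1 w2 w3;
  pose W := (w1, w2, w3, w3);
  rewrite ?[w1](L4e1 W) ?[w2](L4e2 W) ?[w3](L4e3 W);
  lin_fin W.

Ltac lin2 t1 t2 :=
  let W := fresh "W" in let w1 := fresh "w" in let w2 := fresh "w" in
  set w1 := t1; set w2 := t2; clearbody w1 w2;
  pose W := (w1, w2, w2, w2);
  rewrite ?[w1](L4e1 W) ?[w2](L4e2 W);
  lin_fin W.

Lemma test (C : numFieldType) (V : lmodType {poly C}) (x y : V) (a : {poly C}) :
  a *: (x + y) - y = a *: x + (a - 1) *: y.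
Proof. lin2 x y. all: ring. Qed.

Definition q8 (C : numFieldType) : {poly C} := ((8%:R : C)^-1)%:P.

Lemma q4 (C : numFieldType) : ((4%:R : C)^-1)%:P = 2%:R * q8 C.
Proof.
rewrite /q8 -(rmorph_nat (@polyC C)) -rmorphM; congr (_%:P).
have h4 : (4%:R : C) != 0 by rewrite pnatr_eq0.
have h8 : (8%:R : C) != 0 by rewrite pnatr_eq0.
have -> : (8%:R : C) = 2%:R * 4%:R by rewrite -natrM.
rewrite invfM mulrA mulfV ?mul1r // pnatr_eq0 //.
Qed.

Lemma relHX (C : numFieldType) (V : lmodType {poly C}) (X Y H : {linear V -> V}) v :
  gdK_module X Y H -> H (X v) = X v *+ 2 + X (H v).
Proof. by case=> h1 _ _ _; move/eqP: (h1 v); rewrite subr_eq => /eqP. Qed.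

Lemma relHY (C : numFieldType) (V : lmodType {poly C}) (X Y H : {linear V -> V}) v :
  gdK_module X Y H -> H (Y v) = - (Y v *+ 2) + Y (H v).
Proof. by case=> _ h1 _ _; move/eqP: (h1 v); rewrite subr_eq => /eqP. Qed.

Lemma relXY (C : numFieldType) (V : lmodType {poly C}) (X Y H : {linear V -> V}) v :
  gdK_module X Y H -> X (Y v) = 'X^2 *: H v + Y (X v).
Proof. by case=> _ _ h1 _; move/eqP: (h1 v); rewrite subr_eq => /eqP. Qed.

Lemma Omnf (C : numFieldType) (V : lmodType {poly C}) (X Y H : {linear V -> V}) v :
  gdK_module X Y H ->
  Omega_d X Y H v = (q8 C * 'X^2) *: H (H v) + (4%:R * q8 C) *: Y (X v)
     + (2%:R * q8 C * 'X^2) *: H v.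
Proof.
move=> g; rewrite /Omega_d (relXY _ g) q4.
set q := q8 C.
lin3 (H (H v)) (Y (X v)) (H v). all: ring.
Qed.

Ltac normV X Y H g := rewrite ?(linearD X, linearD Y, linearD H, linearZ_LR X, linearZ_LR Y, linearZ_LR H,
  raddfMn X, raddfMn Y, raddfMn H, linearN X, linearN Y, linearN H, relHX _ g, relHY _ g, relXY _ g).

Lemma OmX (C : numFieldType) (V : lmodType {poly C}) (X Y H : {linear V -> V}) v :
  gdK_module X Y H -> Omega_d X Y H (X v) = X (Omega_d X Y H v).
Proof.
move=> g; rewrite !(Omnf _ g); set q := q8 C.
normV X Y H g.
lin4 (Y (X (X v))) (X (H (H v))) (X (H v)) (X v). all: ring.
Qed.

Lemma OmY (C : numFieldType) (V : lmodType {poly C}) (X Y H : {linear V -> V}) v :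
  gdK_module X Y H -> Omega_d X Y H (Y v) = Y (Omega_d X Y H v).
Proof.
move=> g; rewrite !(Omnf _ g); set q := q8 C.
normV X Y H g.
lin4 (Y (Y (X v))) (Y (H (H v))) (Y (H v)) (Y v). all: ring.
Qed.

Lemma OmH (C : numFieldType) (V : lmodType {poly C}) (X Y H : {linear V -> V}) v :
  gdK_module X Y H -> Omega_d X Y H (H v) = H (Omega_d X Y H v).
Proof.
move=> g; rewrite !(Omnf _ g); set q := q8 C.
normV X Y H g.
lin4 (Y (X (H v))) (H (H (H v))) (H (H v)) (Y (X v)). all: ring.
Qed.

Lemma ACA3 (T : zmodType) (a b c d e f : T) :
  a + b + (c + d) + (e + f) = a + c + e + (b + d + f).
Proof. by rewrite (addrACA a b c d) (addrACA (a + c) (b + d) e f). Qed.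

Lemma OmD (C : numFieldType) (V : lmodType {poly C}) (X Y H : {linear V -> V}) u v :
  gdK_module X Y H -> Omega_d X Y H (u + v) = Omega_d X Y H u + Omega_d X Y H v.
Proof.
move=> g; rewrite !(Omnf _ g) !(linearD X, linearD Y, linearD H) !scalerDr.
exact: ACA3.
Qed.

Lemma OmZ (C : numFieldType) (V : lmodType {poly C}) (X Y H : {linear V -> V}) (p : {poly C}) v :
  gdK_module X Y H -> Omega_d X Y H (p *: v) = p *: Omega_d X Y H v.
Proof.
move=> g; rewrite !(Omnf _ g) !(linearZ_LR X, linearZ_LR Y, linearZ_LR H) !scalerDr !scalerA.
rewrite ![p * _]mulrC. reflexivity.
Qed.

Lemma Om0 (C : numFieldType) (V : lmodType {poly C}) (X Y H : {linear V -> V}) :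
  gdK_module X Y H -> Omega_d X Y H 0 = 0.
Proof. by move=> g; have := OmZ 0 0 g; rewrite !scale0r. Qed.

Lemma OmKX (C : numFieldType) (V : lmodType {poly C}) (X Y H : {linear V -> V}) (k : int) v :
  gdK_module X Y H -> X v = 0 -> H v = k%:~R *: v ->
  Omega_d X Y H v = (((8^-1 : C)%:P * 'X^2 * (((k + 1)%:~R : {poly C}) ^+ 2 - 1))) *: v.
Proof.
move=> g hx hk; rewrite (Omnf _ g) hx linear0 scaler0 addr0 hk (linearZ_LR H) hk.
rewrite !scalerA -scalerDl; congr (_ *: _); rewrite /q8; rewrite rmorphD /=; ring.
Qed.

Lemma OmKY (C : numFieldType) (V : lmodType {poly C}) (X Y H : {linear V -> V}) (k : int) v :
  gdK_module X Y H -> Y v = 0 -> H v = k%:~R *: v ->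
  Omega_d X Y H v = (((8^-1 : C)%:P * 'X^2 * (((k - 1)%:~R : {poly C}) ^+ 2 - 1))) *: v.
Proof.
move=> g hy hk.
have yx : Y (X v) = - ('X^2 * k%:~R) *: v.
  have := relXY v g; rewrite hy linear0 hk scalerA => /eqP; rewrite eq_sym addrC addr_eq0.
  by move=> /eqP ->; rewrite scaleNr.
rewrite (Omnf _ g) yx hk (linearZ_LR H) hk.
rewrite !scalerA -!scalerDl; congr (_ *: _); rewrite /q8; rewrite rmorphB /=; ring.
Qed.


Fixpoint inspan (C : numFieldType) (V : lmodType {poly C}) (s : seq V) (v : V) : Prop :=
  if s is x :: s' then exists c w, inspan s' w /\ v = c *: x + w else v = 0.

Lemma inspan0 (C : numFieldType) (V : lmodType {poly C}) (s : seq V) : inspan s 0.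
Proof. by elim: s => [|x s IH] //=; exists 0, 0; rewrite scale0r addr0. Qed.

Lemma inspanD (C : numFieldType) (V : lmodType {poly C}) (s : seq V) u v :
  inspan s u -> inspan s v -> inspan s (u + v).
Proof.
elim: s u v => [|x s IH] u v /=; first by move=> -> ->; rewrite addr0.
move=> [c [w [hw ->]]] [c' [w' [hw' ->]]]; exists (c + c'), (w + w'); split; first exact: IH.
by rewrite scalerDl addrACA.
Qed.

Lemma inspanZ (C : numFieldType) (V : lmodType {poly C}) (s : seq V) (p : {poly C}) v :
  inspan s v -> inspan s (p *: v).
Proof.
elim: s v => [|x s IH] v /=; first by move=> ->; rewrite scaler0.
move=> [c [w [hw ->]]]; exists (p * c), (p *: w); split; first exact: IH.
by rewrite scalerDr scalerA.
Qed.

Lemma inspanB (C : numFieldType) (V : lmodType {poly C}) (s : seq V) u v :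
  inspan s u -> inspan s v -> inspan s (u - v).
Proof. by move=> hu hv; apply: inspanD => //; rewrite -scaleN1r; apply: inspanZ. Qed.

Lemma inspan_sum (C : numFieldType) (V : lmodType {poly C}) (s : seq V) (c : seq {poly C}) :
  inspan s (\sum_(i < size s) c`_i *: s`_i).
Proof.
elim: s c => [|x s IH] c /=; first by rewrite big_ord0.
rewrite big_ord_recl /=; exists c`_0, (\sum_(i < size s) c`_(bump 0 i) *: s`_i); split => //.
have := IH (behead c); congr inspan; apply: eq_bigr => i _; by rewrite nth_behead.
Qed.

Lemma span_bound (C : numFieldType) (V : lmodType {poly C}) (tf : torsion_free V)
  (s : seq V) (e : V) :
  inspan s e -> e <> 0 ->
  exists N, forall (P : {poly C}) y, inspan s y -> e = P *: y -> (size P <= N)%N.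
Proof.
elim: s e => [|x s IH] e /=; first by move=> ->.
move=> [c [w [hw he]]] e0.
case: (classic (exists d : {poly C}, d != 0 /\ inspan s (d *: x))) => [[d [d0 hd]]|nd].
  have de : d *: e <> 0 by move=> /tf [/eqP|]; [rewrite (negbTE d0)|].
  have hde : inspan s (d *: e).
    by rewrite he scalerDr scalerA mulrC -scalerA; apply: inspanD; [apply: inspanZ|apply: inspanZ].
  have [N HN] := IH _ hde de; exists N => P y [c' [w' [hw' ->]]] ey; apply: (HN _ (d *: (c' *: x + w'))).
    by rewrite scalerDr scalerA mulrC -scalerA; apply: inspanD; [apply: inspanZ|apply: inspanZ].
  by rewrite ey !scalerA mulrC.
have ind : forall d, inspan s (d *: x) -> d = 0.
  by move=> d hd; case: (eqVneq d 0) => // d0; exfalso; apply: nd; exists d.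
have key : forall P c' w', inspan s w' -> e = P *: (c' *: x + w') -> c = P * c'.
  move=> P c' w' hw' ey; apply/eqP; rewrite -subr_eq0; apply/eqP; apply: ind.
  have -> : (c - P * c') *: x = P *: w' - w.
    move: ey; rewrite he scalerDr scalerA => /eqP; rewrite -subr_eq0 => /eqP ey.
    apply/eqP; rewrite -subr_eq0; apply/eqP; rewrite -[RHS]ey.
    by rewrite scalerBl opprB opprD addrACA.
  by apply: inspanB => //; apply: inspanZ.
case: (eqVneq c 0) => [c0|c0].
  have ew : e = w by rewrite he c0 scale0r add0r.
  have e0' : w <> 0 by rewrite -ew.
  have [N HN] := IH _ hw e0'; exists N => P y [c' [w' [hw' ->]]] ey.
  have := key _ _ _ hw' ey; rewrite c0 => /esym /eqP; rewrite mulf_eq0 => /orP [/eqP P0|/eqP c'0].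
    by exfalso; apply: e0; rewrite ey P0 scale0r.
  by apply: (HN _ w') => //; rewrite -ew ey c'0 scale0r add0r.
exists (size c) => P y [c' [w' [hw' ->]]] ey.
have cP := key _ _ _ hw' ey.
have c'0 : c' != 0 by apply: contraNneq c0 => c'0; rewrite cP c'0 mulr0.
have P0 : P != 0 by apply: contraNneq c0 => P0; rewrite cP P0 mul0r.
have hc : (0 < size c')%N by rewrite size_poly_gt0.
rewrite cP size_mul //; case: (size c') hc => // n _; by rewrite addnS /= leq_addr.
Qed.


Lemma decomp (C : numFieldType) (V : lmodType {poly C}) (X Y H : {linear V -> V}) v :
  gdK_module X Y H -> exists s, v = \sum_(p <- s) p.2 /\ wts H s.
Proof. by case=> _ _ _ h; have [s [e hs]] := h v; exists s. Qed.

Lemma wcomp_scale (C : numFieldType) (V : lmodType {poly C}) (s : seq (int * V)) (P : {poly C}) k :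
  wcomp [seq (p.1, P *: p.2) | p <- s] k = P *: wcomp s k.
Proof.
have := @wcomp_map C V s id (fun _ v => P *: v) k (@inj_id _) (fun j => scalerDr P) (fun j => scaler0 _ P).
by [].
Qed.

Lemma sum_scale (C : numFieldType) (V : lmodType {poly C}) (s : seq (int * V)) (P : {poly C}) :
  \sum_(p <- [seq (p.1, P *: p.2) | p <- s]) p.2 = P *: \sum_(p <- s) p.2.
Proof. by rewrite big_map scaler_sumr. Qed.

Lemma wts_scale (C : numFieldType) (V : lmodType {poly C}) (H : {linear V -> V}) (s : seq (int * V)) (P : {poly C}) :
  wts H s -> wts H [seq (p.1, P *: p.2) | p <- s].
Proof. by move=> hs p /mapP [q qs ->]; apply: wtZ; apply: hs. Qed.

Lemma wcomp_single (C : numFieldType) (V : lmodType {poly C}) n (u : V) :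
  wcomp [:: (n, u)] n = u.
Proof. by rewrite /wcomp big_cons eqxx big_nil addr0. Qed.

Lemma wts_single (C : numFieldType) (V : lmodType {poly C}) (H : {linear V -> V}) n (u : V) :
  wt H n u -> wts H [:: (n, u)].
Proof. by move=> hu p; rewrite inE => /eqP ->. Qed.

Lemma grade_scale (C : numFieldType) (V : lmodType {poly C}) (X Y H : {linear V -> V})
  n (u y : V) (P : {poly C}) :
  gdK_module X Y H -> wt H n u -> u = P *: y -> exists y', wt H n y' /\ u = P *: y'.
Proof.
move=> g hu uy; have [s [ys hs]] := decomp y g.
exists (wcomp s n); split; first exact: wcomp_wt.
have := wcomp_eq (wts_single hu) (wts_scale (P:=P) hs).
rewrite sum_scale -ys -uy big_cons big_nil addr0 => /(_ erefl n).
by rewrite wcomp_single wcomp_scale.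
Qed.

Lemma prod_div (C : numFieldType) (V : lmodType {poly C}) (X Y H : {linear V -> V})
  n (e : V) (zs : seq C) :
  gdK_module X Y H -> wt H n e -> uniq zs -> (forall z, z \in zs -> tzV z e) ->
  exists y, wt H n y /\ e = (\prod_(z <- zs) ('X - z%:P)) *: y.
Proof.
move=> g he; elim: zs => [|z zs IH] /=.
  by move=> _ _; exists e; rewrite big_nil scale1r.
move=> /andP [zn uzs] hz.
have [y' [hy' ey']] := IH uzs (fun z' h => hz z' (@mem_behead _ (z :: zs) z' h)).
have [y1 e1] := hz z (mem_head _ _).
have [y1' [hy1 e1']] := grade_scale g he e1.
set P' := \prod_(z0 <- zs) ('X - z0%:P) in ey'.
have P'z : P'.[z] != 0.
  rewrite /P' horner_prod prodf_seq_neq0; apply/allP => z0 z0zs /=.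
  by rewrite hornerXsubC subr_eq0; apply: contraNneq zn => ->.
have : root (P' - P'.[z]%:P) z by rewrite /root hornerD hornerN hornerC subrr.
move=> /factor_theorem [Q hQ].
exists ((P'.[z])^-1%:P *: (y1' - Q *: y')); split.
  by apply: wtZ; apply: wtB => //; apply: wtZ.
rewrite big_cons mulrC -scalerA.
have -> : ('X - z%:P) *: ((P'.[z])^-1%:P *: (y1' - Q *: y')) = y'.
  rewrite scalerA mulrC -scalerA scalerBr -e1' ey' scalerA [('X - z%:P) * Q]mulrC -hQ.
  rewrite -scalerBl opprB addrCA subrr addr0 scalerA -rmorphM mulVf // scale1r //.
by [].
Qed.

Lemma key_bound (C : numFieldType) (V : lmodType {poly C}) (X Y H : {linear V -> V})
  n (e : V) :
  gdK_module X Y H -> torsion_free V -> admissible H -> wt H n e -> e <> 0 ->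
  exists N, forall zs : seq C, uniq zs -> (forall z, z \in zs -> tzV z e) -> (size zs <= N)%N.
Proof.
move=> g tf adm he e0.
have [s [hs sp]] := adm n.
have es : inspan s e by have [c ->] := sp e he; apply: inspan_sum.
have [N HN] := span_bound tf es e0.
exists N => zs uzs hz; have [y [hy ey]] := prod_div g he uzs hz.
have ys : inspan s y by have [c ->] := sp y hy; apply: inspan_sum.
by have := HN _ _ ys ey; rewrite size_prod_XsubC => /ltnW.
Qed.


Lemma wt_Om (C : numFieldType) (V : lmodType {poly C}) (X Y H : {linear V -> V}) k x :
  gdK_module X Y H -> wt H k x -> wt H k (Omega_d X Y H x).
Proof. by move=> g hx; rewrite /wt -(OmH _ g) hx (OmZ _ _ g). Qed.

Lemma Om_sum (C : numFieldType) (V : lmodType {poly C}) (X Y H : {linear V -> V}) (s : seq (int * V)) :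
  gdK_module X Y H -> Omega_d X Y H (\sum_(p <- s) p.2) = \sum_(p <- s) Omega_d X Y H p.2.
Proof. by move=> g; rewrite (big_morph _ (fun u v => OmD u v g) (Om0 g)). Qed.

Lemma tz_scale (C : numFieldType) (V : lmodType {poly C}) z (P : {poly C}) (y : V) :
  P *: (('X - z%:P) *: y) = ('X - z%:P) *: (P *: y).
Proof. by rewrite !scalerA mulrC. Qed.

Lemma fiber_step (C : numFieldType) (V : lmodType {poly C}) (X Y H : {linear V -> V})
  (z : C) (p : {poly C}) (u v : V) :
  gdK_module X Y H -> fiber_irreducible X Y H z ->
  Omega_d X Y H u = p *: u ->
  tzV z u \/ tzV z (Omega_d X Y H v - p *: v).
Proof.
move=> g [_ irr] hu.
set c := p.[z].
have : root (p - c%:P) z by rewrite /root hornerD hornerN hornerC subrr.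
move=> /factor_theorem [Q hQ].
pose Om := Omega_d X Y H.
pose W := fun x => tzV z (Om x - c%:P *: x).
have Wu : W u.
  exists (Q *: u); rewrite /W /Om hu -scalerBl hQ scalerA [Q * _]mulrC. reflexivity.
have := irr W.
case.
- by exists 0; rewrite /Om (Om0 g) !scaler0 subr0.
- move=> x y [a ea] [b eb]; exists (a + b).
  by rewrite /Om (OmD _ _ g) scalerDr scalerDr -ea -eb opprD addrACA.
- move=> P x [a ea]; exists (P *: a).
  by rewrite /Om (OmZ _ _ g) -tz_scale -ea scalerBr !scalerA mulrC.
- move=> x [a ->]; exists (Om a - c%:P *: a).
  rewrite /Om (OmZ _ _ g) scalerBr -/(Om a) scalerA [c%:P * _]mulrC -scalerA //.
- move=> x [a ea]; split.
  + exists (X a); rewrite /Om (OmX _ g) -(linearZ_LR X) -(linearB X) -/(Om x) ea.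
    by rewrite (linearZ_LR X).
  + exists (Y a); rewrite /Om (OmY _ g) -(linearZ_LR Y) -(linearB Y) -/(Om x) ea.
    by rewrite (linearZ_LR Y).
  + exists (H a); rewrite /Om (OmH _ g) -(linearZ_LR H) -(linearB H) -/(Om x) ea.
    by rewrite (linearZ_LR H).
- move=> s us hs [a ea] q qs.
  have [sa [ae hsa]] := decomp a g.
  pose F := fun (j : int) x => Om x - c%:P *: x.
  pose s' := [seq (q.1, F q.1 q.2) | q <- s].
  have hs' : wts H s'.
    move=> r /mapP [r' r's ->] /=; apply: wtB; first by apply: wt_Om => //; apply: hs.
    by apply: wtZ; apply: hs.
  have sum' : \sum_(r <- s') r.2 = \sum_(r <- [seq (r.1, ('X - z%:P) *: r.2) | r <- sa]) r.2.
    rewrite sum_scale -ae -ea /s' big_map /F /= sumrB /Om (Om_sum _ g) scaler_sumr //.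
  have := wcomp_eq hs' (wts_scale (P:=('X - z%:P)) hsa) sum' q.1.
  have -> : wcomp s' q.1 = F q.1 q.2.
    apply: (@wcomp_uniq _ _ s' (q.1, F q.1 q.2)); last exact: (map_f (fun r => (r.1, F r.1 r.2)) qs).
    by rewrite /s' -map_comp.
  by rewrite wcomp_scale => e2; exists (wcomp sa q.1); rewrite /W -e2.
- by move=> h; left; apply: h.
move=> h; right; have [y ey] := h v.
exists (y - Q *: v).
rewrite scalerBr -ey -tz_scale scalerA -hQ.
rewrite /Om scalerBl opprB addrA; congr (_ + _).
by rewrite addrAC addrK.
Qed.


Lemma global (C : numFieldType) (V : lmodType {poly C}) (X Y H : {linear V -> V})
  (f : nat -> C) :
  gdK_module X Y H -> torsion_free V -> admissible H ->
  (forall z, ~ fiber_irreducible X Y H z -> exists n, f n = z) ->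
  (forall M, exists zs : seq C, [/\ uniq zs, size zs = M & forall z, z \in zs -> forall n, f n <> z]) ->
  forall n u (p : {poly C}), wt H n u -> u <> 0 -> Omega_d X Y H u = p *: u ->
  forall v, Omega_d X Y H v = p *: v.
Proof.
move=> g tf adm gi huge n u p hu u0 Ou v.
have [s [-> hs]] := decomp v g.
rewrite (Om_sum _ g) scaler_sumr; apply: eq_big_seq => q qs.
have hw : wt H q.1 q.2 := hs q qs.
apply/eqP; rewrite -subr_eq0; apply/eqP; apply: NNPP => e0.
have he : wt H q.1 (Omega_d X Y H q.2 - p *: q.2).
  by apply: wtB; [apply: wt_Om|apply: wtZ].
have [N1 HN1] := key_bound g tf adm hu u0.
have [N2 HN2] := key_bound g tf adm he e0.
have [zs [uzs szs nf]] := huge (N1 + N2).+1.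
have disj : forall z, z \in zs -> tzV z u \/ tzV z (Omega_d X Y H q.2 - p *: q.2).
  move=> z zz; apply: (fiber_step _ g) => //; apply: NNPP => nirr.
  by have [m fm] := gi z nirr; apply: (nf z zz m).
pose a := fun z => `[< tzV z u >].
have h1 : (size [seq z <- zs | a z] <= N1)%N.
  apply: HN1; first exact: filter_uniq.
  by move=> z; rewrite mem_filter => /andP [/asboolP].
have h2 : (size [seq z <- zs | predC a z] <= N2)%N.
  apply: HN2; first exact: filter_uniq.
  move=> z; rewrite mem_filter => /andP [/= /asboolPn nz zz].
  by case: (disj z zz).
have := count_predC a zs; rewrite -!size_filter szs => eq.
by have := leq_add h1 h2; rewrite eq ltnn.
Qed.

Definition imF (C : numFieldType) (V : lmodType {poly C}) (G : V -> V) (v : V) := exists b, v = G b.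

Lemma imF_sum (C : numFieldType) (V : lmodType {poly C}) (G : {linear V -> V}) (r : seq int) (F : int -> V) :
  (forall k, k \in r -> imF G (F k)) -> imF G (\sum_(k <- r) F k).
Proof.
move=> h; rewrite big_seq; apply: big_ind.
- by exists 0; rewrite linear0.
- by move=> x y [a ->] [b ->]; exists (a + b); rewrite linearD.
- exact: h.
Qed.

Lemma extract (C : numFieldType) (V : lmodType {poly C}) (X Y H F G : {linear V -> V})
  (sF sG : int) (v : V) :
  gdK_module X Y H ->
  (forall j x, wt H j x -> wt H (j + sF) (F x)) ->
  (forall j x, wt H j x -> wt H (j + sG) (G x)) ->
  F v = 0 -> ~ imF G v ->
  exists k w, [/\ wt H k w, F w = 0, ~ imF G w &
    forall d mu : C, imF G (H v + d%:P *: v - mu%:P *: v) -> k%:~R + d = mu].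
Proof.
move=> g hF hG Fv nv.
have [s [vs hs]] := decomp v g.
pose r := undup (map fst s).
have : ~ forall k, k \in r -> imF G (wcomp s k).
  move=> all; apply: nv; rewrite vs -(@sum_wcomp _ _ s r) ?undup_uniq //.
    exact: imF_sum.
  by move=> j; rewrite mem_undup.
move=> nall; have [k nk'] := not_all_ex_not _ _ nall; have [kr nk] := imply_to_and _ _ nk'.
exists k, (wcomp s k); split => //; first exact: wcomp_wt.
- have hm : wts H [seq (p.1 + sF, F p.2) | p <- s].
    by move=> q /mapP [q' q's ->]; apply: hF; apply: hs.
  have := wcomp_eq hm (s2 := [::]) (fun q => ltac:(by [])).
  rewrite big_map big_nil -linear_sum -vs Fv => /(_ erefl (k + sF)).
  rewrite wcomp_nil (@wcomp_map _ _ s (fun j => j + sF) (fun _ x => F x)) //.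
  + exact: addIr.
  + by move=> j x y; rewrite linearD.
  + by move=> j; rewrite linear0.
- move=> d mu [b eb].
  have [sb [bs hsb]] := decomp b g.
  pose Fm := fun (j : int) (x : V) => ((j%:~R + d - mu)%:P : {poly C}) *: x.
  have hm1 : wts H [seq (p.1, Fm p.1 p.2) | p <- s].
    by move=> q /mapP [q' q's ->]; apply: wtZ; apply: hs.
  have hm2 : wts H [seq (p.1 + sG, G p.2) | p <- sb].
    by move=> q /mapP [q' q's ->]; apply: hG; apply: hsb.
  have esum : \sum_(p <- [seq (p.1, Fm p.1 p.2) | p <- s]) p.2 =
              \sum_(p <- [seq (p.1 + sG, G p.2) | p <- sb]) p.2.
    rewrite !big_map -linear_sum -bs -eb vs linear_sum !scaler_sumr -big_split -sumrB /=.
    apply: eq_big_seq => q qs /=.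
    by rewrite /Fm (hs q qs) !rmorphB rmorphD /= rmorph_int scalerBl scalerDl.
  have := wcomp_eq hm1 hm2 esum k.
  rewrite (@wcomp_map _ _ s id Fm k) //; last first.
  + by move=> j; rewrite /Fm scaler0.
  + by move=> j x y; rewrite /Fm scalerDr.
  have -> : k = (k - sG) + sG by rewrite subrK.
  rewrite (@wcomp_map _ _ sb (fun j => j + sG) (fun _ x => G x)) //; last first.
  + by move=> j; rewrite linear0.
  + by move=> j x y; rewrite linearD.
  + exact: addIr.
  rewrite subrK /Fm => ek.
  apply/eqP; rewrite -subr_eq0; apply/eqP; apply: NNPP => c0; apply: nk.
  exists ((((k%:~R + d - mu) : C)^-1)%:P *: wcomp sb (k - sG)).
  rewrite (linearZ_LR G) -ek scalerA -rmorphM mulVf ?scale1r //.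
  by apply/eqP.
Qed.


Lemma c4 (C : numFieldType) : ((4%:R : C)^-1)%:P * 4%:R = 1 :> {poly C}.
Proof. by rewrite -(rmorph_nat (@polyC C)) -rmorphM mulVf ?pnatr_eq0. Qed.

Lemma kerD (C : numFieldType) (V : lmodType {poly C}) (X Y : {linear V -> V}) (a : V * V) :
  in_ker_D X Y a -> Y a.2 = 0 /\ X a.1 = 0.
Proof.
rewrite /in_ker_D /Dirac => e; have e1 := congr1 fst e; have e2 := congr1 snd e.
split => //; move: e2 => /= e2.
by have := congr1 (fun x => 4%:R *: x) e2; rewrite /= scalerA mulrC c4 scale1r scaler0.
Qed.

Lemma imD (C : numFieldType) (V : lmodType {poly C}) (X Y : {linear V -> V}) (a : V * V) :
  in_im_D X Y a -> imF Y a.1 /\ imF X a.2.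
Proof.
move=> [b ->] /=; split; first by exists b.2.
by exists ((4%:R^-1)%:P *: b.1); rewrite (linearZ_LR X).
Qed.

Lemma imD' (C : numFieldType) (V : lmodType {poly C}) (X Y : {linear V -> V}) (a : V * V) :
  imF Y a.1 -> imF X a.2 -> in_im_D X Y a.
Proof.
move=> [y ey] [x ex]; exists (4%:R *: x, y); rewrite /Dirac /= (linearZ_LR X) scalerA c4 scale1r.
by case: a ey ex => a1 a2 /= -> ->.
Qed.

Lemma finish (C : numFieldType) (V : lmodType {poly C}) (X Y H : {linear V -> V})
  (f : nat -> C) :
  gdK_module X Y H -> torsion_free V -> admissible H ->
  (forall z, ~ fiber_irreducible X Y H z -> exists n, f n = z) ->
  (forall M, exists zs : seq C, [/\ uniq zs, size zs = M & forall z, z \in zs -> forall n, f n <> z]) ->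
  forall k w (lam0 : {poly C}), wt H k w -> w <> 0 ->
  Omega_d X Y H w = ((8^-1 : C)%:P * 'X^2 * (lam0 ^+ 2 - 1)) *: w ->
  has_infchar X Y H lam0 /\
  forall lam, has_infchar X Y H lam -> lam = lam0 \/ lam = - lam0.
Proof.
move=> g tf adm gi huge k w lam0 hw w0 Ow.
split; first exact: (global g tf adm gi huge hw w0 Ow).
move=> lam hl; have := hl w; rewrite Ow => /eqP; rewrite -subr_eq0 -scalerBl => /eqP.
case/tf => [|//]; rewrite -mulrBr => /eqP; rewrite mulf_eq0 => /orP [|].
  rewrite mulf_eq0 polyC_eq0 invr_eq0 pnatr_eq0 /= => /eqP X0.
  by have := congr1 (size : {poly C} -> nat) X0; rewrite size_polyXn size_poly0.
rewrite opprB addrA subrK subr_eq0 -subr_eq0 subr_sqr mulf_eq0 => /orP [|].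
  by rewrite subr_eq0 => /eqP ->; left.
by rewrite addr_eq0 => /eqP ->; right; rewrite opprK.
Qed.


Module Unc.
From mathcomp Require Import all_classical all_reals.
From mathcomp Require Import topology normedtype measure lebesgue_measure.
Local Open Scope classical_set_scope.
Local Open Scope ring_scope.

Lemma real_not_countable (R : realType) (h : nat -> R) : exists r : R, forall n, h n <> r.
Proof.
apply/not_all_not_ex => Hall.
have Hr : range h = [set: R].
  apply/seteqP; split => // r _; have [n hn] : exists n, h n = r.
    by apply/not_all_not_ex => H; apply: (Hall r) => n; apply: H.
  by exists n.
have c : countable (range h).
  rewrite [X in countable X](_ : _ = \bigcup_(n in [set: nat]) [set h n]).
    by apply: bigcup_countable => //.
  by apply/seteqP; split => [r [n _ <-]|r [n _ ->]]; [exists n|exists n].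
have := countable_lebesgue_measure0 c; rewrite Hr => H0.
have : (lebesgue_measure (`[0%R, 1%R] : set R) <= lebesgue_measure [set: R])%E.
  by apply: le_measure => //; rewrite inE //.
rewrite H0 lebesgue_measure_itv /= lte_fin ltr01 /=.
by rewrite oppr0 adde0 lee_fin ler10.
Qed.
End Unc.

Lemma huge_C (R : realType) (f : nat -> R[i]) M :
  exists zs : seq R[i], [/\ uniq zs, size zs = M & forall z, z \in zs -> forall n, f n <> z].
Proof.
elim: M => [|M [zs [uzs szs nf]]]; first by exists [::].
pose g := fun n => if (n < size zs)%N then nth 0 zs n else f (n - size zs)%N.
have [r hr] := Unc.real_not_countable (fun n => complex.Re (g n)).
exists (Complex r 0 :: zs); split.
- rewrite /=; apply/andP; split => //; apply/negP => zin.
  have := nth_index 0 zin; have := index_mem (Complex r 0) zs; rewrite zin => ilt.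
  by move=> e; apply: (hr (index (Complex r 0) zs)); rewrite /g ilt e.
- by rewrite /= szs.
- move=> z; rewrite in_cons => /orP [/eqP -> n fn|]; last exact: nf.
  by apply: (hr (n + size zs)%N); rewrite /g ltnNge leq_addl /= addnK fn.
Qed.

Lemma wtX (C : numFieldType) (V : lmodType {poly C}) (X Y H : {linear V -> V}) j x :
  gdK_module X Y H -> wt H j x -> wt H (j + 2) (X x).
Proof.
move=> g hx; rewrite /wt (relHX _ g) hx (linearZ_LR X) intrD scalerDl addrC.
by rewrite -scaler_nat.
Qed.

Lemma wtY (C : numFieldType) (V : lmodType {poly C}) (X Y H : {linear V -> V}) j x :
  gdK_module X Y H -> wt H j x -> wt H (j + (-2)) (Y x).
Proof.
move=> g hx; rewrite /wt (relHY _ g) hx (linearZ_LR Y) intrD scalerDl addrC.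
by rewrite -scaler_nat -scaleNr rmorphN.
Qed.


(* ---- part 9 ---- *)
Unset Implicit Arguments.
Set Strict Implicit.

Theorem mainTheorem16 (R : realType) (V : lmodType {poly R[i]})
  (X Y H : {linear V -> V}) :
  gdK_module X Y H -> torsion_free V -> admissible H ->
  generically_irreducible X Y H ->
  HD_nonzero X Y ->
  (exists lam : {poly R[i]}, has_infchar X Y H lam) /\
  (forall mu : R[i], HD_weight_nonzero X Y H mu ->
     has_infchar X Y H mu%:P /\
     (forall lam : {poly R[i]}, has_infchar X Y H lam ->
        (* lam = 1 (x) w.mu with w in W(g,k) = {1, w0}, w0 = -1 on k^* *)
        exists w : bool, lam = (if w then - mu else mu)%:P)).
Proof.
move=> g tf adm [f gi] [a [ka nia]].
have huge := huge_C f.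
have fin := finish g tf adm gi huge.
have hX := fun j x => @wtX _ _ X Y H j x g.
have hY := fun j x => @wtY _ _ X Y H j x g.
have nz : forall (G : {linear V -> V}) w, ~ imF G w -> w <> 0.
  by move=> G w nw w0; apply: nw; exists 0; rewrite w0 linear0.
split.
  have [Ya Xa] := kerD ka.
  case: (classic (imF Y a.1)) => [iy|niy].
    case: (classic (imF X a.2)) => [ix|nix]; first by case: nia; apply: imD'.
    have [k [w [hw Yw nw _]]] := extract g hY hX Ya nix.
    have [h _] := fin _ _ _ hw (nz _ _ nw) (OmKY g Yw hw).
    by exists ((k - 1)%:~R).
  have [k [w [hw Xw nw _]]] := extract g hX hY Xa niy.
  have [h _] := fin _ _ _ hw (nz _ _ nw) (OmKX g Xw hw).
  by exists ((k + 1)%:~R).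
move=> mu [b [kb _ ib nib]].
have [Yb Xb] := kerD kb.
have [i1 i2] := imD ib; move: i1 i2 => /= i1 i2.
suff : has_infchar X Y H mu%:P /\
  forall lam, has_infchar X Y H lam -> lam = mu%:P \/ lam = - mu%:P.
  move=> [h1 h2]; split => // lam /h2 [->|->]; first by exists false.
  by exists true; rewrite rmorphN.
case: (classic (imF Y b.1)) => [iy|niy].
  case: (classic (imF X b.2)) => [ix|nix]; first by case: nib; apply: imD'.
  have [k [w [hw Yw nw pm]]] := extract g hY hX Yb nix.
  have kmu : k%:~R + (-1) = mu.
    apply: pm; move: i2; congr imF.
    by rewrite rmorphN rmorph1 scaleN1r.
  have := OmKY g Yw hw; rewrite -kmu.
  have -> : ((k - 1)%:~R : {poly R[i]}) = (k%:~R + -1 : R[i])%:P.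
    by rewrite rmorphD rmorphN rmorph1 /= rmorphB rmorph1 /= rmorph_int.
  by move=> Ow; apply: (fin _ _ _ hw (nz _ _ nw) Ow).
have [k [w [hw Xw nw pm]]] := extract g hX hY Xb niy.
have kmu : k%:~R + 1 = mu.
  apply: pm; move: i1; congr imF.
  by rewrite rmorph1 scale1r.
have := OmKX g Xw hw; rewrite -kmu.
have -> : ((k + 1)%:~R : {poly R[i]}) = (k%:~R + 1 : R[i])%:P.
  by rewrite rmorphD rmorph1 /= rmorphD rmorph1 /= rmorph_int.
by move=> Ow; apply: (fin _ _ _ hw (nz _ _ nw) Ow).
Qed.
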